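(* Let $p,q\geq 2$ be integers. (i) $\chi_{\mathrm{so}}(K_p\Box K_q)=pq$. (ii) If both $p$ and $q$ are odd (and at least $3$), then $\chi_{\mathrm{so}}(K_p\times K_q)=pq$. (iii) If $p$ is even and $q$ is odd, then $\chi_{\mathrm{so}}(K_p\times K_q)=q$. (iv) If both $p$ and $q$ are even, then $\chi_{\mathrm{so}}(K_p\times K_q)=\min(p,q)$.
   Context: A strong odd coloring of a simple graph $G$ is a proper vertex coloring of $G$ such that for every non-isolated vertex $v$ and every color $c$, either no vertex of the open neighborhood $N_G(v)$ has color $c$, or color $c$ is used on an odd number of vertices of $N_G(v)$; $\chi_{\mathrm{so}}(G)$ is the minimum number of colors in such a coloring. $K_n$ is the complete graph on $n$ vertices. The Cartesian product $G\Box H$ has vertex set $V_G\times V_H$, with $(g,h)(g',h')$ an edge iff ($g=g'$ and $hh'\in E_H$) or ($gg'\in E_G$ and $h=h'$). The direct product $G\times H$ has vertex set $V_G\times V_H$, with $(g,h)(g',h')$ an edge iff $gg'\in E_G$ and $hh'\in E_H$. *)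

(* Defs.v *)
From mathcomp Require Import all_boot.
Set Implicit Arguments. Unset Strict Implicit. Unset Printing Implicit Defensive.

(* A simple graph on a finite vertex type T is a symmetric irreflexive
   relation e : rel T (the graphs below are all of this kind). *)

Definition complete_rel (n : nat) : rel 'I_n := fun i j => i != j.

Definition cart_rel (T U : finType) (eG : rel T) (eH : rel U) : rel (T * U) :=
  fun x y => ((x.1 == y.1) && eH x.2 y.2) || (eG x.1 y.1 && (x.2 == y.2)).

Definition direct_rel (T U : finType) (eG : rel T) (eH : rel U) : rel (T * U) :=
  fun x y => eG x.1 y.1 && eH x.2 y.2.

Definition proper_col (T : finType) (e : rel T) (k : nat) (c : {ffun T -> 'I_k}) : bool :=
  [forall u, forall v, e u v ==> (c u != c v)].

Definition strong_odd_col (T : finType) (e : rel T) (k : nat) (c : {ffun T -> 'I_k}) : bool :=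
  proper_col e c &&
  [forall v, [exists u, e v u] ==>
     [forall a : 'I_k, (#|[set u | e v u & c u == a]| == 0) ||
                       odd #|[set u | e v u & c u == a]| ]].

Definition has_so_col (T : finType) (e : rel T) (k : nat) : bool :=
  [exists c : {ffun T -> 'I_k}, strong_odd_col e c].

(* For a loopless graph one always exists with k = #|T| (injective colouring),
   so we minimise over k <= #|T|; the default #|T| is never reached
   by the minimum unless it is the actual value. *)
Definition chi_so (T : finType) (e : rel T) : nat :=
  \big[minn/#|T|]_(k < #|T|.+1 | has_so_col e k) (k : nat).
Arguments complete_rel n : clear implicits.

(* Main.v *)
Require Import Defs.
From mathcomp Require Import all_boot.
From mathcomp Require Import zify.
Set Implicit Arguments. Unset Strict Implicit. Unset Printing Implicit Defensive.

Lemma chi_soE (T : finType) (e : rel T) k0 :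
  k0 <= #|T| -> has_so_col e k0 -> (forall k, has_so_col e k -> k0 <= k) -> chi_so e = k0.
Proof.
move=> le0 h0 hmin; apply/eqP; rewrite eqn_leq; apply/andP; split.
  have lt : k0 < #|T|.+1 by [].
  rewrite /chi_so; have : Ordinal lt \in index_enum 'I_#|T|.+1 by rewrite mem_index_enum.
  elim: (index_enum _) => [//|j r IH]; rewrite inE big_cons.
  case/orP => [/eqP <-|/IH]; first by rewrite h0 /=; exact: geq_minl.
  by case: ifP => // _ h; apply: leq_trans h; exact: geq_minr.
apply: (big_ind (fun m => k0 <= m)) => //.
  by move=> x y; rewrite leq_min => -> ->.
by move=> i /hmin.
Qed.

Lemma card_le_classes (T : finType) k (c : T -> 'I_k) M :
  (forall a, #|[set x | c x == a]| <= M) -> #|T| <= k * M.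
Proof.
move=> hM; rewrite -sum1_card (partition_big c xpredT) //=.
rewrite -[k in k * M]card_ord -sum_nat_const; apply: leq_sum => a _.
by rewrite sum1dep_card; apply: leq_trans (hM a); rewrite cardsE.
Qed.

Lemma so_proper (T : finType) (e : rel T) k (c : {ffun T -> 'I_k}) u v :
  strong_odd_col e c -> e u v -> c u != c v.
Proof. by case/andP => /forallP /(_ u) /forallP /(_ v) /implyP. Qed.

Lemma so_nadj (T : finType) (e : rel T) k (c : {ffun T -> 'I_k}) u v :
  strong_odd_col e c -> c u = c v -> e u v = false.
Proof. by move=> h huv; apply/negP => /(so_proper h); rewrite huv eqxx. Qed.

Lemma so_odd (T : finType) (e : rel T) k (c : {ffun T -> 'I_k}) v w a :
  strong_odd_col e c -> e v w ->
  (#|[set u | e v u & c u == a]| == 0) || odd #|[set u | e v u & c u == a]|.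
Proof.
case/andP => _ /forallP /(_ v) /implyP H hv.
by have /forallP := H (introT existsP (ex_intro _ w hv)); apply.
Qed.

Lemma inj_so (T : finType) (e : rel T) : (forall x, e x x = false) -> has_so_col e #|T|.
Proof.
move=> irr; apply/existsP; exists [ffun x => enum_rank x]; apply/andP; split.
  apply/forallP => u; apply/forallP => v; apply/implyP => huv; rewrite !ffunE.
  apply/negP => /eqP /enum_rank_inj h; by rewrite h irr in huv.
apply/forallP => v; apply/implyP => _; apply/forallP => a.
have : #|[set u | e v u & [ffun x => enum_rank x] u == a]| <= 1.
  rewrite -(cards1 (enum_val a)); apply: subset_leq_card; apply/subsetP => u.
  by rewrite !inE ffunE => /andP [_ /eqP <-]; rewrite enum_rankK.
by case: #|_| => [|[|]].
Qed.

Lemma exists_neq n (i : 'I_n) : 2 <= n -> exists j : 'I_n, j != i.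
Proof.
move=> hn; have h0 : 0 < n by lia. have h1 : 1 < n by lia.
case: (eqVneq i (Ordinal h0)) => [->|ne]; last by exists (Ordinal h0); rewrite eq_sym.
by exists (Ordinal h1).
Qed.

Lemma cart_inj p q k (c : {ffun 'I_p * 'I_q -> 'I_k}) :
  strong_odd_col (cart_rel (complete_rel p) (complete_rel q)) c -> injective c.
Proof. idtac.
move=> hc [a b] [a' b'] huv; apply/eqP; apply/negPn/negP => neq.
have nadj := so_nadj hc huv; rewrite /cart_rel /complete_rel /= in nadj.
have ha : a != a' by apply/negP => /eqP e; subst a'; move: nadj neq; rewrite eqxx /=; case: eqP => // ->; rewrite eqxx.
have hb : b != b' by apply/negP => /eqP e; subst b'; move: nadj; rewrite ha eqxx /= orbT.
set e := cart_rel _ _ in hc.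
have ewu : e (a, b') (a, b) by rewrite /e /cart_rel /complete_rel /= eqxx eq_sym hb.
have H := so_odd (c (a, b)) hc ewu.
suff : [set u | e (a, b') u & c u == c (a, b)] = [set (a, b); (a', b')].
  by move=> E; move: H; rewrite E cards2 neq.
apply/eqP; rewrite eqEsubset; apply/andP; split; last first.
  apply/subsetP => u; rewrite !inE => /orP [] /eqP ->; rewrite -?huv eqxx andbT.
    by [].
  by rewrite /e /cart_rel /complete_rel /= ha (eqxx b') orbT.
apply/subsetP => -[x y]; rewrite !inE => /andP [adj /eqP hcol].
move: adj; rewrite /e /cart_rel /complete_rel /= => /orP [/andP [/eqP ex hy]|/andP [hx /eqP ey]].
  subst x; case: (eqVneq y b) => [->|hyb]; first by rewrite eqxx.
  have := so_nadj hc hcol; rewrite /e /cart_rel /complete_rel /=. by rewrite (eqxx a) hyb.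
subst y; case: (eqVneq x a') => [->|hxa]; first by rewrite (eqxx (a', b')) orbT.
by have := so_nadj hc (etrans hcol huv); rewrite /e /cart_rel /complete_rel /= hxa (eqxx b') orbT.
Qed.

Lemma part_i p q : 2 <= p -> 2 <= q ->
  chi_so (cart_rel (complete_rel p) (complete_rel q)) = p * q.
Proof. idtac.
move=> hp hq; have -> : p * q = #|{: 'I_p * 'I_q}| by rewrite card_prod !card_ord.
apply: chi_soE => //.
  apply: inj_so => -[x y]; by rewrite /cart_rel /complete_rel /= !eqxx.
move=> k /existsP [c /cart_inj hinj]; by rewrite -[k in _ <= k]card_ord; apply: leq_card hinj.
Qed.

Lemma row_even p q k (c : {ffun 'I_p * 'I_q -> 'I_k}) a b b' :
  2 <= p -> strong_odd_col (direct_rel (complete_rel p) (complete_rel q)) c ->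
  c (a, b) = c (a, b') -> b != b' -> ~~ odd q.
Proof.
move=> hp hc hcb hbb.
set e := direct_rel _ _ in hc.
have eE : forall u v, e u v = (u.1 != v.1) && (u.2 != v.2) by [].
set col := c (a, b).
have [x hx] := exists_neq a hp.
pose B := [set y' | c (a, y') == col].
have FE : forall y, [set z | e (x, y) z & c z == col] = [set (a, y') | y' in B :\ y].
  move=> y; apply/setP => -[z1 z2]; rewrite inE; apply/idP/imsetP.
    move=> /andP [adj /eqP hz].
    have hz1 : z1 = a.
      apply/eqP; apply/negPn/negP => hne.
      have h1 := so_nadj hc hz; have h2 := so_nadj hc (etrans hz hcb).
      rewrite eE /= hne /= in h1; rewrite eE /= hne /= in h2.
      move/negbFE/eqP: h1 => h1; move/negbFE/eqP: h2 => h2.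
      by move: hbb; rewrite -h1 -h2 (eqxx z2).
    subst z1; exists z2 => //; rewrite !inE hz (eqxx col) andbT.
    by move: adj; rewrite eE /= => /andP [_]; rewrite eq_sym.
  case=> y'; rewrite !inE => /andP [hy' /eqP hcy] [-> ->].
  by rewrite eE /= hcy (eqxx col) andbT hx eq_sym.
have cardF : forall y, #|[set z | e (x, y) z & c z == col]| = #|B :\ y|.
  move=> y; rewrite FE card_imset //; by move=> y1 y2 [].
have bB : b \in B by rewrite inE.
have b'B : b' \in B by rewrite inE -hcb.
have oddD : odd #|B :\ b|.
  have := so_odd col hc (_ : e (x, b) (a, b')).
  rewrite cardF eE /= hx hbb => /(_ isT) /orP [|//].
  move/eqP/cards0_eq/setP/(_ b'); by rewrite !inE -hcb (eqxx (c (a, b))) eq_sym hbb.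
have hB : #|B| = (#|B :\ b|).+1 by rewrite (cardsD1 b B) bB.
suff BT : B = setT.
  have : #|B| = q by rewrite BT cardsT card_ord.
  by move=> <-; rewrite hB /= oddD.
apply/setP => y; rewrite in_setT; apply/negPn/negP => yB.
have hyb : y != b by apply/negP => /eqP ey; move: yB; rewrite ey bB.
have := so_odd col hc (_ : e (x, y) (a, b)).
rewrite cardF eE /= hx hyb => /(_ isT).
have -> : B :\ y = B by apply/setP => z; rewrite !inE; case: eqP => // ->; move: yB; rewrite inE => /negbTE ->.
by rewrite hB /= oddD.
Qed.

Lemma col_even p q k (c : {ffun 'I_p * 'I_q -> 'I_k}) a a' b :
  2 <= q -> strong_odd_col (direct_rel (complete_rel p) (complete_rel q)) c ->
  c (a, b) = c (a', b) -> a != a' -> ~~ odd p.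
Proof.
move=> hq hc hcb hbb.
set e := direct_rel _ _ in hc.
have eE : forall u v, e u v = (u.1 != v.1) && (u.2 != v.2) by [].
set col := c (a, b).
have [x hx] := exists_neq b hq.
pose B := [set y' | c (y', b) == col].
have FE : forall y, [set z | e (y, x) z & c z == col] = [set (y', b) | y' in B :\ y].
  move=> y; apply/setP => -[z1 z2]; rewrite inE; apply/idP/imsetP.
    move=> /andP [adj /eqP hz].
    have hz1 : z2 = b.
      apply/eqP; apply/negPn/negP => hne.
      have h1 := so_nadj hc hz; have h2 := so_nadj hc (etrans hz hcb).
      rewrite eE /= hne /= andbT in h1; rewrite eE /= hne /= andbT in h2.
      move/negbFE/eqP: h1 => h1; move/negbFE/eqP: h2 => h2.
      by move: hbb; rewrite -h1 -h2 (eqxx z1).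
    subst z2; exists z1 => //; rewrite !inE hz (eqxx col) andbT.
    by move: adj; rewrite eE /= => /andP [h _]; rewrite eq_sym.
  case=> y'; rewrite !inE => /andP [hy' /eqP hcy] [-> ->].
  by rewrite eE /= hcy (eqxx col) andbT hx eq_sym hy'.
have cardF : forall y, #|[set z | e (y, x) z & c z == col]| = #|B :\ y|.
  move=> y; rewrite FE card_imset //; by move=> y1 y2 [].
have bB : a \in B by rewrite inE.
have b'B : a' \in B by rewrite inE -hcb.
have oddD : odd #|B :\ a|.
  have := so_odd col hc (_ : e (a, x) (a', b)).
  rewrite cardF eE /= hx hbb => /(_ isT) /orP [|//].
  move/eqP/cards0_eq/setP/(_ a'); by rewrite !inE -hcb (eqxx (c (a, b))) eq_sym hbb.
have hB : #|B| = (#|B :\ a|).+1 by rewrite (cardsD1 a B) bB.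
suff BT : B = setT.
  have : #|B| = p by rewrite BT cardsT card_ord.
  by move=> <-; rewrite hB /= oddD.
apply/setP => y; rewrite in_setT; apply/negPn/negP => yB.
have hyb : y != a by apply/negP => /eqP ey; move: yB; rewrite ey bB.
have := so_odd col hc (_ : e (y, x) (a, b)).
rewrite cardF eE /= hx hyb => /(_ isT).
have -> : B :\ y = B by apply/setP => z; rewrite !inE; case: eqP => // ->; move: yB; rewrite inE => /negbTE ->.
by rewrite hB /= oddD.
Qed.

Lemma col_card p q (b : 'I_q) : #|[set x : 'I_p * 'I_q | x.2 == b]| = p.
Proof.
have -> : [set x : 'I_p * 'I_q | x.2 == b] = setX setT [set b].
  by apply/setP => -[x y]; rewrite !inE.
by rewrite cardsX cardsT cards1 card_ord muln1.
Qed.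

Lemma row_card p q (a : 'I_p) : #|[set x : 'I_p * 'I_q | x.1 == a]| = q.
Proof.
have -> : [set x : 'I_p * 'I_q | x.1 == a] = setX [set a] setT.
  by apply/setP => -[x y]; rewrite !inE andbT.
by rewrite cardsX cardsT cards1 card_ord mul1n.
Qed.

Section D.
Variables (p q k : nat) (hp : 2 <= p) (hq : 2 <= q) (c : {ffun 'I_p * 'I_q -> 'I_k}).
Hypothesis hc : strong_odd_col (direct_rel (complete_rel p) (complete_rel q)) c.

Lemma nadjD u v : c u = c v -> u.1 = v.1 \/ u.2 = v.2.
Proof.
move=> h; have := so_nadj hc h; rewrite /direct_rel /complete_rel.
by case: eqP => [|_ /= /negbFE /eqP]; [left|right].
Qed.

Lemma class_le_p : odd q -> forall col, #|[set x | c x == col]| <= p.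
Proof.
move=> oq col; case: (set_0Vmem [set x | c x == col]) => [->|[u0]]; first by rewrite cards0.
rewrite inE => /eqP hu0.
apply: (leq_trans _ (eq_leq (col_card p u0.2))); apply: subset_leq_card; apply/subsetP => x; rewrite !inE => /eqP hx.
apply/negPn/negP => ne.
case: (nadjD (etrans hx (esym hu0))) => [e1|e2]; last by rewrite e2 eqxx in ne.
move: x e1 ne hx => [x1 x2] /= e1 ne hx; subst x1.
move: u0 hu0 ne hx => [u1 u2] /= hu0 ne hx.
by have := row_even hp hc (etrans hx (esym hu0)) ne; rewrite oq.
Qed.

Lemma class_le_max col : #|[set x | c x == col]| <= maxn p q.
Proof.
case: (set_0Vmem [set x | c x == col]) => [->|[u0]]; first by rewrite cards0.
rewrite inE => /eqP hu0.
case: (boolP ([set x | c x == col] \subset [set x : 'I_p * 'I_q | x.2 == u0.2])) => [sub|nsub].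
  apply: leq_trans (subset_leq_card sub) _; rewrite col_card; exact: leq_maxl.
have [x1] := subsetPn nsub; rewrite !inE => /eqP hx1 nx1.
have h1 : x1.1 = u0.1.
  by case: (nadjD (etrans hx1 (esym hu0))) => // e2; rewrite e2 eqxx in nx1.
have sub : [set x | c x == col] \subset [set x : 'I_p * 'I_q | x.1 == u0.1].
  apply/subsetP => x; rewrite !inE => /eqP hx.
  case: (nadjD (etrans hx (esym hu0))) => [->|e2]; first by rewrite eqxx.
  case: (nadjD (etrans hx (esym hx1))) => [->|e3]; first by rewrite h1 eqxx.
  by rewrite -e3 e2 eqxx in nx1.
apply: leq_trans (subset_leq_card sub) _; rewrite row_card; exact: leq_maxr.
Qed.

Lemma inj_odd : odd p -> odd q -> injective c.
Proof.
move=> op oq [a b] [a' b'] h; case: (nadjD h) => /= e; subst.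
  case: (eqVneq b b') => [->//|ne].
  by have := row_even hp hc h ne; rewrite oq.
case: (eqVneq a a') => [->//|ne].
by have := col_even hq hc h ne; rewrite op.
Qed.
End D.

Lemma col_color p q : 2 <= p -> ~~ odd p ->
  has_so_col (direct_rel (complete_rel p) (complete_rel q)) q.
Proof.
move=> hp ep; apply/existsP; exists [ffun x : 'I_p * 'I_q => x.2]; apply/andP; split.
  apply/forallP => u; apply/forallP => v; apply/implyP => /andP [_ h]; by rewrite !ffunE.
apply/forallP => -[x y]; apply/implyP => _; apply/forallP => a.
case: (eqVneq a y) => [->|ne].
  apply/orP; left; rewrite cards_eq0; apply/eqP; apply/setP => -[z1 z2]; rewrite !inE ffunE /=.
  rewrite /direct_rel /complete_rel /=; apply/negbTE/negP => /andP [/andP [_ /eqP h] /eqP e]; exact: h (esym e).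
have -> : [set u | direct_rel (complete_rel p) (complete_rel q) (x, y) u &
                   [ffun x0 : 'I_p * 'I_q => x0.2] u == a] = [set (x', a) | x' in [set~ x]].
  apply/setP => -[z1 z2]; rewrite inE ffunE /=; apply/idP/imsetP.
    move=> /andP [/andP [h1 h2] /eqP e]; exists z1; first by rewrite !inE eq_sym.
    by rewrite e.
  by case=> x'; rewrite !inE => hx [-> ->]; rewrite /direct_rel /complete_rel /= eq_sym hx eq_sym ne (eqxx a).
rewrite card_imset; last by move=> ? ? [].
rewrite cardsC1 card_ord; apply/orP; right.
by rewrite -(prednK (ltnW hp)) /= in ep; rewrite negbK in ep.
Qed.

Lemma row_color p q : 2 <= q -> ~~ odd q ->
  has_so_col (direct_rel (complete_rel p) (complete_rel q)) p.
Proof.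
move=> hp ep; apply/existsP; exists [ffun x : 'I_p * 'I_q => x.1]; apply/andP; split.
  apply/forallP => u; apply/forallP => v; apply/implyP => /andP [h _]; by rewrite !ffunE.
apply/forallP => -[x y]; apply/implyP => _; apply/forallP => a.
case: (eqVneq a x) => [->|ne].
  apply/orP; left; rewrite cards_eq0; apply/eqP; apply/setP => -[z1 z2]; rewrite !inE ffunE /=.
  rewrite /direct_rel /complete_rel /=; apply/negbTE/negP => /andP [/andP [/eqP h _] /eqP e]; exact: h (esym e).
have -> : [set u | direct_rel (complete_rel p) (complete_rel q) (x, y) u &
                   [ffun x0 : 'I_p * 'I_q => x0.1] u == a] = [set (a, y') | y' in [set~ y]].
  apply/setP => -[z1 z2]; rewrite inE ffunE /=; apply/idP/imsetP.
    move=> /andP [/andP [h1 h2] /eqP e]; exists z2; first by rewrite !inE eq_sym.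
    by rewrite e.
  case=> y'; rewrite !inE => hx [-> ->]; rewrite /direct_rel /complete_rel /=. by rewrite eq_sym ne eq_sym hx (eqxx a).
rewrite card_imset; last by move=> ? ? [].
rewrite cardsC1 card_ord; apply/orP; right.
by rewrite -(prednK (ltnW hp)) /= in ep; rewrite negbK in ep.
Qed.

Theorem theorem4p4 (p q : nat) (hp : 2 <= p) (hq : 2 <= q) :
  [/\ chi_so (cart_rel (complete_rel p) (complete_rel q)) = p * q,
      (odd p -> odd q -> chi_so (direct_rel (complete_rel p) (complete_rel q)) = p * q),
      (~~ odd p -> odd q -> chi_so (direct_rel (complete_rel p) (complete_rel q)) = q)
    & (~~ odd p -> ~~ odd q -> chi_so (direct_rel (complete_rel p) (complete_rel q)) = minn p q)].
Proof.
have cT : #|{: 'I_p * 'I_q}| = p * q by rewrite card_prod !card_ord.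
split.
- exact: part_i.
- move=> op oq; rewrite -cT; apply: chi_soE => //.
    by apply: inj_so => -[x y]; rewrite /direct_rel /complete_rel /= eqxx.
  move=> k /existsP [c hc]; rewrite -[k in _ <= k]card_ord; exact: leq_card (inj_odd hp hq hc op oq).
- move=> ep oq; apply: chi_soE.
  + by rewrite cT; apply: leq_pmull; lia.
  + exact: col_color.
  move=> k /existsP [c hc].
  have := card_le_classes (class_le_p hp hc oq); rewrite cT mulnC leq_pmul2r //; lia.
- move=> ep eq; apply: chi_soE.
  + by rewrite cT; apply: leq_trans (geq_minl p q) _; apply: leq_pmulr; lia.
  + case: (leqP p q) => h.
      exact: row_color.
    exact: col_color.
  move=> k /existsP [c hc].
  have := card_le_classes (class_le_max hc); rewrite cT.
  case: (leqP p q) => h.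
    by rewrite leq_pmul2r //; lia.
  by rewrite mulnC leq_pmul2r //; lia.
Qed.
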